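(* Let $(W,S)$ be a finitely generated Coxeter system and $u<v$ in $W$. If $u'$ covers $u$ in the interval $[u,v]$, then $u'=(v^{S(u)})_{S(u)\cup\{s\}}\,u$ for some $s\in\mathrm{Des}(v^{S(u)})$, and $C(u')=C(u)\setminus\{s\}$.
   Context: $(W,S)$ is a finitely generated Coxeter system with length function $\ell$. For $w\in W$, $S(w)\subseteq S$ is the set of simple reflections appearing in a (any) reduced expression of $w$, $C(w)=S\setminus S(w)$, and $\mathrm{Des}(w)=\{s\in S:\ell(ws)<\ell(w)\}$. For $I\subseteq S$, $W_I$ is the parabolic subgroup generated by $I$, $X_I=\{u\in W:\ell(us)>\ell(u)\ \forall s\in I\}$, and every $w\in W$ factors uniquely as $w=w^Iw_I$ with $w^I\in X_I$, $w_I\in W_I$ (parabolic components along $I$). The partial order on $W$: $u\le v$ iff $v_{S(u)}=u$. An element $u'$ covers $u$ in $[u,v]$ if $u<u'\le v$ and there is no $w$ with $u<w<u'$. *)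

(* Defs.v *)
From mathcomp Require Import all_boot.
From Stdlib Require Import ClassicalEpsilon.

Set Implicit Arguments.
Unset Strict Implicit.
Unset Printing Implicit Defensive.

Record group := Group {
  gcar :> Type;
  gmul : gcar -> gcar -> gcar;
  gone : gcar;
  ginv : gcar -> gcar;
  gmulA : forall x y z, gmul x (gmul y z) = gmul (gmul x y) z;
  gmul1g : forall x, gmul gone x = x;
  gmulVg : forall x, gmul (ginv x) x = gone
}.

Arguments gmul {g}.
Arguments gone {g}.
Arguments ginv {g}.

Fixpoint gpow (G : group) (x : G) (n : nat) : G :=
  match n with O => gone | S n => gmul x (gpow x n) end.

Definition is_hom (G H : group) (phi : G -> H) : Prop :=
  forall x y, phi (gmul x y) = gmul (phi x) (phi y).

Definition wprod (W : group) (S : finType) (e : S -> W) (ws : seq S) : W :=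
  foldr (fun a x => gmul (e a) x) gone ws.

(* (W, e(S)) is a Coxeter system: e(S) is a set of involutions (e
   injective, e a <> 1, e a ^2 = 1) generating W, and W is presented by
   the generators S subject to the relations a^2 = 1 and (a b)^{m(a,b)} = 1,
   m(a,b) the order of e a * e b in W (no relation if infinite).  The
   presentation is stated through its universal property. *)
Definition coxeter_system (W : group) (S : finType) (e : S -> W) : Prop :=
  [/\ injective e,
      (forall a, e a <> gone),
      (forall a, gmul (e a) (e a) = gone),
      (forall w : W, exists ws, wprod e ws = w) &
      (forall (G : group) (f : S -> G),
         (forall a, gmul (f a) (f a) = gone) ->
         (forall a b n, gpow (gmul (e a) (e b)) n = gone ->
                        gpow (gmul (f a) (f b)) n = gone) ->
         exists phi : W -> G, is_hom phi /\ forall a, phi (e a) = f a)].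

Section Cox.
Variables (W : group) (S : finType) (e : S -> W).

Definition is_length (w : W) (n : nat) : Prop :=
  (exists ws, wprod e ws = w /\ size ws = n) /\
  (forall ws, wprod e ws = w -> n <= size ws).

Definition ell (w : W) : nat := epsilon (inhabits 0) (is_length w).

Definition supp (w : W) (s : S) : Prop :=
  exists ws, [/\ wprod e ws = w, size ws = ell w & s \in ws].

Definition csupp (w : W) (s : S) : Prop := ~ supp w s.

Definition Des (w : W) (s : S) : Prop := ell (gmul w (e s)) < ell w.

Definition in_parab (I : S -> Prop) (w : W) : Prop :=
  exists ws, wprod e ws = w /\ forall a, a \in ws -> I a.

(* X_I: minimal coset representatives *)
Definition in_X (I : S -> Prop) (u : W) : Prop :=
  forall a, I a -> ell u < ell (gmul u (e a)).

(* parabolic components w = w^I w_I *)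
Definition pcomp_hi (I : S -> Prop) (w : W) : W :=
  epsilon (inhabits gone)
    (fun u => in_X I u /\ in_parab I (gmul (ginv u) w)).

Definition pcomp_lo (I : S -> Prop) (w : W) : W :=
  gmul (ginv (pcomp_hi I w)) w.

Definition cle (u v : W) : Prop := pcomp_lo (supp u) v = u.
Definition clt (u v : W) : Prop := cle u v /\ u <> v.

Definition covers_in (u v u' : W) : Prop :=
  [/\ clt u u', cle u' v & ~ exists w, clt u w /\ clt w u'].

End Cox.

(* Main.v *)
Require Import Defs.
From mathcomp Require Import all_boot zify.
From Stdlib Require Import ClassicalEpsilon ProofIrrelevance FunctionalExtensionality.
Set Implicit Arguments.
Unset Strict Implicit.
Unset Printing Implicit Defensive.

Section GroupLemmas.
Variable G : group.
Implicit Types x y z : G.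

Lemma gmulgV x : gmul x (ginv x) = gone.
Proof.
rewrite -[gmul x (ginv x)]gmul1g -{1}(gmulVg (ginv x)) -gmulA (gmulA (ginv x)).
by rewrite gmulVg gmul1g gmulVg.
Qed.

Lemma gmulg1 x : gmul x gone = x.
Proof. by rewrite -(gmulVg x) gmulA gmulgV gmul1g. Qed.

Lemma gmulKg x y : gmul (ginv x) (gmul x y) = y.
Proof. by rewrite gmulA gmulVg gmul1g. Qed.

Lemma gmulKVg x y : gmul x (gmul (ginv x) y) = y.
Proof. by rewrite gmulA gmulgV gmul1g. Qed.

Lemma gmulgK x y : gmul (gmul y x) (ginv x) = y.
Proof. by rewrite -gmulA gmulgV gmulg1. Qed.

Lemma gmulgKV x y : gmul (gmul y (ginv x)) x = y.
Proof. by rewrite -gmulA gmulVg gmulg1. Qed.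

Lemma gmulI x y z : gmul x y = gmul x z -> y = z.
Proof. by move=> h; rewrite -(gmulKg x y) h gmulKg. Qed.

Lemma gmulIr x y z : gmul y x = gmul z x -> y = z.
Proof. by move=> h; rewrite -(gmulgK x y) h gmulgK. Qed.

Lemma ginvK x : ginv (ginv x) = x.
Proof. by apply: (@gmulIr (ginv x)); rewrite gmulVg gmulgV. Qed.

Lemma ginvM x y : ginv (gmul x y) = gmul (ginv y) (ginv x).
Proof.
apply: (@gmulIr (gmul x y)); rewrite gmulVg -gmulA (gmulA (ginv x)) gmulVg gmul1g.
by rewrite gmulVg.
Qed.

Lemma ginv1 : ginv (@gone G) = gone.
Proof. by rewrite -{2}(gmulVg gone) gmulg1. Qed.

Lemma ginv_invol x : gmul x x = gone -> ginv x = x.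
Proof. by move=> h; apply: (@gmulIr x); rewrite gmulVg h. Qed.

Lemma gpowD x m n : gpow x (m + n) = gmul (gpow x m) (gpow x n).
Proof. elim: m => [|m IH] /=; first by rewrite gmul1g. by rewrite IH gmulA. Qed.

End GroupLemmas.

Lemma hom1 (G H : group) (phi : G -> H) : is_hom phi -> phi gone = gone.
Proof.
move=> hp; have h := hp gone gone; rewrite gmulg1 in h.
by rewrite -[LHS](gmulKg (phi gone)) -h gmulVg.
Qed.



(* group of bijections, with reversed composition *)
Record bij (T : Type) := Bij { bf : T -> T; bg : T -> T;
  bfK : cancel bf bg; bgK : cancel bg bf }.

Lemma cxbijE T (p q : bij T) : bf p =1 bf q -> p = q.
Proof.
case: p => f1 g1 h1 k1; case: q => f2 g2 h2 k2 /= hf.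
have ef : f1 = f2 by apply: functional_extensionality.
subst f2.
have eg : g1 = g2.
  by apply: functional_extensionality => x; rewrite -{1}(k2 x) h1.
subst g2; f_equal; apply: proof_irrelevance.
Qed.

Section BijGroup.
Variable T : Type.
Definition bmul (p q : bij T) : bij T.
refine (@Bij T (fun x => bf q (bf p x)) (fun x => bg p (bg q x)) _ _).
- by move=> x; rewrite bfK bfK.
- by move=> x; rewrite bgK bgK.
Defined.
Definition bone : bij T := @Bij T id id (fun _ => erefl) (fun _ => erefl).
Definition binv (p : bij T) : bij T := @Bij T (bg p) (bf p) (@bgK _ p) (@bfK _ p).
Lemma bmulA x y z : bmul x (bmul y z) = bmul (bmul x y) z.
Proof. by apply: cxbijE. Qed.
Lemma bmul1 x : bmul bone x = x.
Proof. by apply: cxbijE. Qed.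
Lemma bmulV x : bmul (binv x) x = bone.
Proof. by apply: cxbijE => y /=; rewrite bgK. Qed.
Definition bijGroup : group := @Defs.Group (bij T) bmul bone binv bmulA bmul1 bmulV.
End BijGroup.

Lemma baddA (x y z : bool) : addb x (addb y z) = addb (addb x y) z.
Proof. by rewrite addbA. Qed.
Lemma badd0 (x : bool) : addb false x = x. Proof. by []. Qed.
Lemma baddV (x : bool) : addb (id x) x = false. Proof. by rewrite addbb. Qed.
Definition boolGroup : group := @Defs.Group bool addb false id baddA badd0 baddV.

Lemma gpow_wprod (G : group) (S : finType) (f : S -> G) a b n :
  gpow (gmul (f a) (f b)) n =
  wprod f (flatten (nseq n [:: a; b])).
Proof.
elim: n => [|n IH] //=. by rewrite IH gmulA.
Qed.

Definition eqW (W : Type) (x y : W) : bool :=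
  if excluded_middle_informative (x = y) then true else false.

Lemma eqWP (W : Type) (x y : W) : reflect (x = y) (eqW x y).
Proof. rewrite /eqW; case: excluded_middle_informative => h; by constructor. Qed.

Definition gconj (W : group) (g t : W) := gmul g (gmul t (ginv g)).

Section Refl.
Variables (W : group) (S : finType) (e : S -> W).
Hypothesis he2 : forall a, gmul (e a) (e a) = gone.

Lemma einv a : ginv (e a) = e a.
Proof. exact: ginv_invol. Qed.

Fixpoint refl (ws : seq S) : seq W :=
  match ws with
  | [::] => [::]
  | a :: ws' => e a :: map (gconj (e a)) (refl ws')
  end.

Definition cxF a (x : W * bool) : W * bool :=
  (gmul (e a) (gmul x.1 (e a)), addb x.2 (eqW x.1 (e a))).

Lemma cxFK a : cancel (cxF a) (cxF a).
Proof.
case=> t b; rewrite /cxF /=.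
rewrite !gmulA he2 gmul1g -!gmulA he2 gmulg1.
case: (eqWP t (e a)) => [->|h].
  rewrite gmulA he2 gmul1g.
  have -> : eqW (e a) (e a) = true by apply/eqWP.
  by rewrite -addbA /= addbF.
case: (eqWP (gmul (e a) (gmul t (e a))) (e a)) => h2.
  exfalso; apply: h.
  have -> : t = gmul (e a) (gmul (gmul (e a) (gmul t (e a))) (e a)).
    by rewrite !gmulA he2 gmul1g -gmulA he2 gmulg1.
  by rewrite h2 he2 gmulg1.
by rewrite addbF addbF.
Qed.

Definition cxP a : bijGroup (W * bool) := Bij (cxFK a) (cxFK a).

Lemma act_wprod ws t b :
  bf (wprod cxP ws) (t, b) =
  (gmul (ginv (wprod e ws)) (gmul t (wprod e ws)),
   addb b (odd (count (eqW t) (refl ws)))).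
Proof.
elim: ws t b => [|a ws IH] t b /=.
  by rewrite ginv1 gmul1g gmulg1 addbF.
rewrite IH /=; congr pair.
  by rewrite ginvM einv !gmulA.
rewrite oddD -addbA; congr addb.
rewrite oddb count_map; congr (_ (+) odd _); apply: eq_count => r /=.
apply/eqWP/eqWP => h.
  by rewrite -h /gconj einv !gmulA he2 gmul1g -!gmulA he2 gmulg1.
by rewrite h /gconj einv !gmulA he2 gmul1g -!gmulA he2 gmulg1.
Qed.

Lemma refl_alt a b n :
  refl (flatten (nseq n [:: a; b])) =
  map (fun k => gmul (gpow (gmul (e a) (e b)) k) (e a)) (iota 0 (n + n)).
Proof.
set g := gmul (e a) (e b).
elim: n => [|n IH] //=.
rewrite IH addnS /= gmul1g.
have -> : iota 2 (n + n) = map (addn 2) (iota 0 (n + n)) by rewrite -iotaDl.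
rewrite -!map_comp gmulg1; congr (_ :: _ :: _).
  by rewrite /gconj einv !gmulA.
apply: eq_map => k /=.
have gc : gmul (gpow g k) g = gmul g (gpow g k).
  by rewrite -[g in gmul _ g]gmulg1 -[gmul g gone]/(gpow g 1) -gpowD addn1.
have gc2 x : gmul (gpow g k) (gmul (e a) (gmul (e b) x)) =
              gmul (e a) (gmul (e b) (gmul (gpow g k) x)).
  by rewrite !(gmulA (e a)) -/g gmulA gc -gmulA.
rewrite /gconj !einv add0n -!gmulA gc2.
by [].
Qed.

End Refl.

Lemma wprod_cat (W : group) (S : finType) (e : S -> W) ws vs :
  wprod e (ws ++ vs) = gmul (wprod e ws) (wprod e vs).
Proof. elim: ws => [|a ws IH] /=; first by rewrite gmul1g. by rewrite IH gmulA. Qed.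

Lemma wprod_rcons (W : group) (S : finType) (e : S -> W) ws a :
  wprod e (rcons ws a) = gmul (wprod e ws) (e a).
Proof. by rewrite -cats1 wprod_cat /= gmulg1. Qed.

Lemma gconjM (W : group) (x y t : W) : gconj (gmul x y) t = gconj x (gconj y t).
Proof. by rewrite /gconj ginvM !gmulA. Qed.

Lemma gconj1 (W : group) (t : W) : gconj gone t = t.
Proof. by rewrite /gconj ginv1 gmul1g gmulg1. Qed.

Section Cox3.
Variables (W : group) (S : finType) (e : S -> W).
Hypothesis hcox : coxeter_system e.

Lemma he2 a : gmul (e a) (e a) = gone.
Proof. by case: hcox. Qed.

Lemma einv' a : ginv (e a) = e a.
Proof. exact: (einv he2). Qed.

Lemma refl_cat ws vs :
  refl e (ws ++ vs) = refl e ws ++ map (gconj (wprod e ws)) (refl e vs).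
Proof.
elim: ws => [|a ws IH] /=.
  by rewrite (eq_map (@gconj1 W)) map_id.
by rewrite IH map_cat -map_comp; congr (_ :: _ ++ _); apply: eq_map => t /=; rewrite gconjM.
Qed.

Lemma count_alt_even a b n t :
  gpow (gmul (e a) (e b)) n = gone ->
  ~~ odd (count (eqW t) (refl e (flatten (nseq n [:: a; b])))).
Proof.
move=> hn; rewrite (refl_alt he2) iotaD map_cat count_cat add0n.
have -> : iota n n = map (addn n) (iota 0 n) by rewrite -iotaDl addn0.
rewrite -map_comp count_map [X in _ + X]count_map.
have -> : count (preim ((fun k => gmul (gpow (gmul (e a) (e b)) k) (e a)) \o addn n) (eqW t)) (iota 0 n)
  = count (preim (fun k => gmul (gpow (gmul (e a) (e b)) k) (e a)) (eqW t)) (iota 0 n).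
  by apply: eq_count => k /=; rewrite gpowD hn gmul1g.
by rewrite addnn odd_double.
Qed.

Lemma rel_cxP a b n :
  gpow (gmul (e a) (e b)) n = gone ->
  gpow (gmul (cxP he2 a) (cxP he2 b)) n = gone.
Proof.
move=> hn; rewrite gpow_wprod; apply: cxbijE => [[t c]].
rewrite (act_wprod he2) -gpow_wprod hn ginv1 gmul1g gmulg1 /=.
by rewrite (negbTE (count_alt_even t hn)) addbF.
Qed.

Lemma refl_parity ws vs t : wprod e ws = wprod e vs ->
  odd (count (eqW t) (refl e ws)) = odd (count (eqW t) (refl e vs)).
Proof.
case: hcox => _ _ _ _ univ.
have p2 a : gmul (cxP he2 a) (cxP he2 a) = gone.
  by apply: cxbijE => x /=; rewrite (cxFK he2).
have [phi [hphi phie]] := univ _ (cxP he2) p2 rel_cxP.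
have pw us : phi (wprod e us) = wprod (cxP he2) us.
  elim: us => [|a us IH] /=; first exact: hom1 hphi.
  by rewrite hphi phie IH.
move=> h; have := f_equal (fun p => (bf p (t, false)).2) (f_equal phi h).
by rewrite /= !pw !(act_wprod he2).
Qed.


Lemma size_parity ws vs : wprod e ws = wprod e vs -> odd (size ws) = odd (size vs).
Proof.
case: hcox => _ _ _ _ univ.
have p2 (a : S) : @gmul boolGroup true true = gone by [].
have rel a b n : gpow (gmul (e a) (e b)) n = gone ->
    gpow (@gmul boolGroup true true) n = gone.
  by move=> _; elim: n => [|n IH] //=; rewrite IH.
have [phi [hphi phie]] := univ boolGroup (fun _ => true) p2 rel.
have pw us : phi (wprod e us) = odd (size us).
  elim: us => [|a us IH] /=; first exact: hom1 hphi.
  by rewrite hphi phie IH.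
by move=> h; rewrite -!pw h.
Qed.

Lemma ell_exists w : exists n, is_length e w n.
Proof.
case: hcox => _ _ _ gen _.
have [ws <-] := gen w.
suff: forall n us, size us <= n -> wprod e us = wprod e ws ->
        exists m, is_length e (wprod e ws) m.
  by move/(_ (size ws) ws (leqnn _) erefl).
elim=> [|n IH] us hs hu.
  exists 0; split; first by exists us; split=> //; apply/eqP; rewrite -leqn0.
  by move=> vs _.
case: (classic (exists vs, wprod e vs = wprod e ws /\ size vs < size us)).
  by case=> vs [h1 h2]; apply: (IH vs) => //; rewrite -ltnS (leq_trans h2).
move=> hno; exists (size us); split; first by exists us.
move=> vs hv; rewrite leqNgt; apply/negP => hlt; apply: hno; by exists vs.
Qed.

Lemma ell_spec w : is_length e w (ell e w).
Proof. exact: (epsilon_spec (inhabits 0) (is_length e w) (ell_exists w)). Qed.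

Lemma ell_min ws : ell e (wprod e ws) <= size ws.
Proof. by case: (ell_spec (wprod e ws)) => _; apply. Qed.

Lemma red_word w : exists ws, wprod e ws = w /\ size ws = ell e w.
Proof. by case: (ell_spec w). Qed.

Lemma ell_odd ws : odd (ell e (wprod e ws)) = odd (size ws).
Proof. by have [vs [h1 <-]] := red_word (wprod e ws); apply: size_parity. Qed.

Lemma ell1 : ell e gone = 0.
Proof. by apply/eqP; rewrite -leqn0 (@ell_min [::]). Qed.

Lemma ell0 w : ell e w = 0 -> w = gone.
Proof. move=> h; have [[|a ws] [hw hs]] := red_word w; [by rewrite -hw | by rewrite h in hs]. Qed.

Lemma ellMs w a : ell e (gmul w (e a)) = (ell e w).+1 \/ ell e w = (ell e (gmul w (e a))).+1.
Proof.
have [ws [hw hs]] := red_word w.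
have [vs [hv hs']] := red_word (gmul w (e a)).
have h1 : ell e (gmul w (e a)) <= (ell e w).+1.
  by rewrite -hs -hw -wprod_rcons (leq_trans (ell_min _)) // size_rcons.
have h2 : ell e w <= (ell e (gmul w (e a))).+1.
  have : wprod e (rcons vs a) = w by rewrite wprod_rcons hv -gmulA he2 gmulg1.
  by move=> hw2; rewrite -{1}hw2 (leq_trans (ell_min _)) // size_rcons hs'.
have h3 : odd (ell e (gmul w (e a))) = ~~ odd (ell e w).
  by rewrite -hs -hw -wprod_rcons ell_odd size_rcons.
case: (ltngtP (ell e (gmul w (e a))) (ell e w)) => h; [right|left|].
- by apply/eqP; rewrite eqn_leq h2 h.
- by apply/eqP; rewrite eqn_leq h1 h.
- by rewrite h in h3; case: (odd _) h3.
Qed.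

Lemma del_refl ws t : 0 < count (eqW t) (refl e ws) ->
  exists ws', [/\ subseq ws' ws, (size ws').+1 = size ws & wprod e ws' = gmul t (wprod e ws)].
Proof.
elim: ws t => [|a ws IH] t //=.
case: (eqWP t (e a)) => [-> _|ht] /=.
  by exists ws; split; [exact: subseq_cons | by [] | rewrite gmulA he2 gmul1g].
rewrite add0n count_map => hc.
have eqc : count (preim (gconj (e a)) (eqW t)) (refl e ws)
          = count (eqW (gconj (ginv (e a)) t)) (refl e ws).
  apply: eq_count => r /=; apply/eqWP/eqWP => h.
    by rewrite h /gconj ginvK !gmulA gmulVg gmul1g gmulgKV.
  by rewrite -h /gconj ginvK !gmulA gmulgV gmul1g gmulgK.
have hc' : 0 < count (eqW (gconj (ginv (e a)) t)) (refl e ws) by rewrite -eqc.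
have [ws' [h1 h2 h3]] := IH _ hc'.
exists (a :: ws'); split=> //=; first by rewrite eqxx.
  by rewrite h2.
by rewrite h3 /gconj ginvK !gmulA gmulgV gmul1g.
Qed.

Lemma nonuniq_shorter ws t : 1 < count (eqW t) (refl e ws) ->
  exists vs, size vs < size ws /\ wprod e vs = wprod e ws.
Proof.
elim: ws t => [|a ws IH] t //=.
rewrite count_map.
have eqc : count (preim (gconj (e a)) (eqW t)) (refl e ws)
         = count (eqW (gconj (e a) t)) (refl e ws).
  apply: eq_count => r /=; apply/eqWP/eqWP => h.
    by rewrite h /gconj !einv' !gmulA he2 gmul1g -gmulA he2 gmulg1.
  by rewrite -h /gconj !einv' !gmulA he2 gmul1g -gmulA he2 gmulg1.
rewrite eqc; case: (eqWP t (e a)) => [->|_] /= h.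
  have hc : 0 < count (eqW (e a)) (refl e ws).
    move: h; rewrite /gconj einv'.
    by rewrite he2 gmulg1; case: (count _ _).
  have [ws' [_ h2 h3]] := del_refl hc.
  by exists ws'; rewrite h2 h3.
have [vs [h1 h2]] := IH _ h.
by exists (a :: vs); rewrite /= h2.
Qed.

Lemma red_uniq ws t : size ws = ell e (wprod e ws) -> count (eqW t) (refl e ws) <= 1.
Proof.
move=> hs; rewrite leqNgt; apply/negP => /nonuniq_shorter [vs [h1 h2]].
by have := ell_min vs; rewrite h2 -hs leqNgt h1.
Qed.

Lemma exchange ws a : size ws = ell e (wprod e ws) ->
  ell e (gmul (wprod e ws) (e a)) < ell e (wprod e ws) ->
  exists ws', [/\ subseq ws' ws, (size ws').+1 = size ws &
                 wprod e ws' = gmul (wprod e ws) (e a)].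
Proof.
set w := wprod e ws => hs hlt.
set t := gconj w (e a).
have [vs [hv hvs]] := red_word (gmul w (e a)).
have hw : wprod e (rcons vs a) = w.
  by rewrite wprod_rcons hv -gmulA he2 gmulg1.
have hl : ell e w = (ell e (gmul w (e a))).+1.
  by case: (ellMs w a) => // h; rewrite h ltnNge leqnSn in hlt.
have hred : size (rcons vs a) = ell e (wprod e (rcons vs a)).
  by rewrite hw size_rcons hvs hl.
have hrefl : refl e (rcons vs a) = refl e vs ++ [:: t].
  rewrite -cats1 refl_cat /= hv; congr (_ ++ [:: _]).
  by rewrite /t /gconj ginvM einv' -!gmulA (gmulA (e a) (e a)) he2 gmul1g.
have c1 := red_uniq t hred.
have hodd : odd (count (eqW t) (refl e (rcons vs a))).
  move: c1; rewrite hrefl count_cat /=.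
  have -> : eqW t t = true by apply/eqWP.
  by case: (count _ _) => [|[|]].
rewrite (refl_parity _ hw) -/w in hodd.
have hpos : 0 < count (eqW t) (refl e ws).
  by case: (count _ _) hodd.
have [ws' [h1 h2 h3]] := del_refl hpos.
by exists ws'; split=> //; rewrite h3 -/w /t /gconj -!gmulA gmulVg gmulg1 //.
Qed.

Lemma reduce_word ws : exists rs,
  [/\ subseq rs ws, wprod e rs = wprod e ws & size rs = ell e (wprod e ws)].
Proof.
elim/last_ind: ws => [|ws a [rs [h1 h2 h3]]].
  by exists [::]; rewrite ell1.
rewrite wprod_rcons; case: (ellMs (wprod e ws) a) => h.
  exists (rcons rs a); split.
  - by rewrite -!cats1; apply: cat_subseq h1 (subseq_refl _).
  - by rewrite wprod_rcons h2.
  - by rewrite size_rcons h3 h.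
have hr : size rs = ell e (wprod e rs) by rewrite h2.
have hl : ell e (gmul (wprod e rs) (e a)) < ell e (wprod e rs) by rewrite h2 h.
have [rs' [g1 g2 g3]] := exchange hr hl.
exists rs'; split.
- exact: subseq_trans g1 (subseq_trans h1 (subseq_rcons _ _)).
- by rewrite g3 h2.
- by apply/eqP; rewrite -eqSS g2 h3 h.
Qed.

Definition inP (I : S -> Prop) w := in_parab e I w.

Lemma parab_red I w : inP I w ->
  exists ws, [/\ wprod e ws = w, size ws = ell e w & forall a, a \in ws -> I a].
Proof.
case=> ws [hw hI]; have [rs [h1 h2 h3]] := reduce_word ws.
exists rs; split; rewrite -?hw //.
by move=> a ha; apply: hI; apply: (mem_subseq h1).
Qed.

Lemma wprod_rev ws : wprod e (rev ws) = ginv (wprod e ws).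
Proof.
elim: ws => [|a ws IH] /=; first by rewrite ginv1.
by rewrite rev_cons wprod_rcons IH ginvM einv'.
Qed.

Lemma parab1 I : inP I gone.
Proof. by exists [::]. Qed.

Lemma parab_e I a : I a -> inP I (e a).
Proof. by move=> h; exists [:: a]; split; [rewrite /= gmulg1 | move=> b; rewrite inE => /eqP ->]. Qed.

Lemma parab_mul I x y : inP I x -> inP I y -> inP I (gmul x y).
Proof.
case=> xs [<- hx] [ys [<- hy]]; exists (xs ++ ys); split; first by rewrite wprod_cat.
by move=> a; rewrite mem_cat => /orP [/hx|/hy].
Qed.

Lemma parab_inv I x : inP I x -> inP I (ginv x).
Proof.
case=> xs [<- hx]; exists (rev xs); split; first by rewrite wprod_rev.
by move=> a; rewrite mem_rev => /hx.
Qed.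

Lemma parab_sub (I J : S -> Prop) w : (forall a, I a -> J a) -> inP I w -> inP J w.
Proof. by move=> hIJ [ws [hw hI]]; exists ws; split=> // a /hI /hIJ. Qed.

Lemma ell_e a : ell e (e a) = 1.
Proof.
have h1 : ell e (e a) <= 1.
  by have := ell_min [:: a]; rewrite /= gmulg1.
case: (ell e (e a)) h1 (@ell0 (e a)) => [|[|]] //.
by move=> _ /(_ erefl) h; case: hcox => _ hne _ _ _; case: (hne a).
Qed.

Lemma parab_gen I a : inP I (e a) -> I a.
Proof.
move=> /parab_red [[|b [|c ws]] [hw hs hI]]; rewrite ell_e //= in hs.
move: hw; rewrite /= gmulg1; case: hcox => inj _ _ _ _ /inj <-.
by apply: hI; rewrite inE.
Qed.

Lemma red_letters I ws : inP I (wprod e ws) -> size ws = ell e (wprod e ws) ->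
  forall a, a \in ws -> I a.
Proof.
elim/last_ind: ws => [|ws a IH] // hpar hred b.
set w' := wprod e ws.
have hw : wprod e (rcons ws a) = gmul w' (e a) by rewrite wprod_rcons.
rewrite hw size_rcons in hred hpar.
have hl' : ell e w' <= size ws by apply: ell_min.
have hws : size ws = ell e w'.
  by case: (ellMs w' a) => h; lia.
have hlt : ell e (gmul (gmul w' (e a)) (e a)) < ell e (gmul w' (e a)).
  by rewrite -gmulA he2 gmulg1 -hws -hred.
have [vs [hv hvs hvI]] := parab_red hpar.
have hvs' : size vs = ell e (wprod e vs) by rewrite hv.
rewrite -hv in hlt; have [vs' [g1 _ g3]] := exchange hvs' hlt.
have hw'I : inP I w'.
  exists vs'; split; first by rewrite g3 hv -gmulA he2 gmulg1.
  by move=> c /(mem_subseq g1) /hvI.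
have hIws := IH hw'I hws.
rewrite mem_rcons inE => /orP [/eqP ->|/hIws //].
apply: parab_gen.
have -> : e a = gmul (ginv w') (gmul w' (e a)) by rewrite gmulKg.
by apply: parab_mul => //; apply: parab_inv.
Qed.

Definition spp w := supp e w.

Lemma supp_parab w : inP (spp w) w.
Proof.
have [ws [hw hs]] := red_word w.
by exists ws; split=> // a ha; exists ws; split.
Qed.

Lemma parab_supp I w : inP I w -> forall s, spp w s -> I s.
Proof.
move=> hI s [ws [hw hs hin]]; rewrite -hw in hI hs.
exact: red_letters hI hs s hin.
Qed.

Lemma subseq_cat_split (T : eqType) (rs s1 s2 : seq T) : subseq rs (s1 ++ s2) ->
  exists r1 r2, [/\ rs = r1 ++ r2, subseq r1 s1 & subseq r2 s2].
Proof.
case/subseqP=> m hm ->.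
have hs : size (take (size s1) m) = size s1.
  by rewrite size_takel // hm size_cat leq_addr.
exists (mask (take (size s1) m) s1), (mask (drop (size s1) m) s2).
by rewrite -mask_cat // cat_take_drop !mask_subseq.
Qed.

Definition minc (I : S -> Prop) x := forall y, inP I y -> ell e x <= ell e (gmul x y).

Lemma exists_min I w : exists x, inP I (gmul (ginv x) w) /\ minc I x.
Proof.
suff: forall n x, ell e x <= n -> inP I (gmul (ginv x) w) ->
        exists x, inP I (gmul (ginv x) w) /\ minc I x.
  by move/(_ _ w (leqnn _)); apply; rewrite gmulVg; apply: parab1.
elim=> [|n IH] x hx hp.
  exists x; split=> // y _; by rewrite (leq_trans hx).
case: (classic (exists y, inP I y /\ ell e (gmul x y) < ell e x)).
  case=> y [hy hlt]; apply: (IH (gmul x y)); first by rewrite -ltnS (leq_trans hlt).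
  by rewrite ginvM -gmulA; apply: parab_mul => //; apply: parab_inv.
move=> hno; exists x; split=> // y hy; rewrite leqNgt; apply/negP => hlt.
by apply: hno; exists y.
Qed.

Lemma add_len I x y : minc I x -> inP I y -> ell e (gmul x y) = ell e x + ell e y.
Proof.
move=> hm hy.
have [xs [hx hxs]] := red_word x.
have [ys [hy' hys hyI]] := parab_red hy.
have [rs [h1 h2 h3]] := reduce_word (xs ++ ys).
rewrite wprod_cat hx hy' in h2 h3.
have [r1 [r2 [hr g1 g2]]] := subseq_cat_split h1.
have hr2 : inP I (wprod e r2).
  by exists r2; split=> // a /(mem_subseq g2) /hyI.
have e1 : wprod e r1 = gmul x (gmul y (ginv (wprod e r2))).
  by rewrite gmulA -h2 hr wprod_cat gmulgK.
have l1 : ell e x <= size r1.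
  have hq : inP I (gmul y (ginv (wprod e r2))).
    by apply: parab_mul => //; apply: parab_inv.
  by have := hm _ hq; rewrite -e1 => h; apply: leq_trans h (ell_min _).
have er : r1 = xs.
  apply/eqP; have [_ <-] := size_subseq_leqif g1.
  by rewrite eqn_leq size_subseq // hxs.
have ey : wprod e r2 = y.
  by apply: (@gmulI _ x); rewrite -h2 hr wprod_cat er hx.
apply/eqP; rewrite eqn_leq; apply/andP; split.
  by rewrite -{1}hx -{1}hy' -wprod_cat (leq_trans (ell_min _)) // size_cat hxs hys.
by rewrite -h3 hr size_cat er hxs leq_add2l -ey ell_min.
Qed.

Lemma min_X I m : minc I m -> in_X e I m.
Proof.
move=> hm a ha; have := hm _ (parab_e ha).
by case: (ellMs m a) => ->; rewrite ?leqnSn // ltnn.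
Qed.

Lemma X_min I x : in_X e I x -> minc I x.
Proof.
move=> hX.
have [m [hz hm]] := exists_min I x.
set z := gmul (ginv m) x in hz.
have hx : x = gmul m z by rewrite /z gmulKVg.
have [zs [hzw hzs hzI]] := parab_red hz.
case/lastP: zs hzw hzs hzI => [|zs a] hzw hzs hzI.
  by move: hx; rewrite -hzw /= gmulg1 => ->.
exfalso.
have ha : I a by apply: hzI; rewrite mem_rcons inE eqxx.
have := hX a ha.
have -> : gmul x (e a) = gmul m (wprod e zs).
  by rewrite hx -hzw wprod_rcons -!gmulA he2 gmulg1.
have hzs' : inP I (wprod e zs).
  by exists zs; split=> // b hb; apply: hzI; rewrite mem_rcons inE hb orbT.
rewrite (add_len hm hzs') hx (add_len hm hz) ltnNge leq_add2l.
by rewrite -hzs size_rcons (leq_trans (ell_min _)).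
Qed.

Lemma uniq_min I x x' : minc I x -> minc I x' -> inP I (gmul (ginv x) x') -> x = x'.
Proof.
move=> hx hx' hz.
have hz' : inP I (gmul (ginv x') x).
  by rewrite -[x in gmul _ x]ginvK -ginvM; apply: parab_inv.
have l1 := add_len hx hz; have l2 := add_len hx' hz'.
rewrite gmulKVg in l1; rewrite gmulKVg in l2.
have : ell e (gmul (ginv x) x') = 0 by lia.
by move/ell0 => h; rewrite -[x'](gmulKVg x) h gmulg1.
Qed.

Lemma hi_spec I w : in_X e I (pcomp_hi e I w) /\ inP I (gmul (ginv (pcomp_hi e I w)) w).
Proof.
rewrite /pcomp_hi; apply: (epsilon_spec (inhabits gone)
  (fun u => in_X e I u /\ in_parab e I (gmul (ginv u) w))).
have [x [h1 h2]] := exists_min I w; exists x; split=> //; exact: min_X.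
Qed.

Lemma hi_eq I w x : in_X e I x -> inP I (gmul (ginv x) w) -> pcomp_hi e I w = x.
Proof.
move=> hX hp; have [h1 h2] := hi_spec I w.
apply: (@uniq_min I); [exact: X_min h1 | exact: X_min hX |].
have -> : gmul (ginv (pcomp_hi e I w)) x =
          gmul (gmul (ginv (pcomp_hi e I w)) w) (ginv (gmul (ginv x) w)).
  by rewrite ginvM ginvK -gmulA gmulKVg.
by apply: parab_mul => //; apply: parab_inv.
Qed.

Lemma lo_mul I x y : in_X e I x -> inP I y ->
  pcomp_hi e I (gmul x y) = x /\ pcomp_lo e I (gmul x y) = y.
Proof.
move=> hX hy; have h : pcomp_hi e I (gmul x y) = x by apply: hi_eq; rewrite // gmulKg.
by split=> //; rewrite /pcomp_lo h gmulKg.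
Qed.

Lemma lo_spec I w : inP I (pcomp_lo e I w) /\ gmul (pcomp_hi e I w) (pcomp_lo e I w) = w.
Proof. by have [_ h] := hi_spec I w; split=> //; rewrite /pcomp_lo gmulKVg. Qed.

Lemma supp_mul I x u : in_X e I x -> inP I u -> forall t, spp u t -> spp (gmul x u) t.
Proof.
move=> hX hu t [us [hus hs ht]].
have [xs [hx hxs]] := red_word x.
exists (xs ++ us); split.
- by rewrite wprod_cat hx hus.
- by rewrite size_cat (add_len (X_min hX) hu) hxs hs.
- by rewrite mem_cat ht orbT.
Qed.

Lemma X1 I : in_X e I gone.
Proof. by move=> a _; rewrite gmul1g ell1 ell_e. Qed.

Lemma X_sub (I J : S -> Prop) x : (forall a, I a -> J a) -> in_X e J x -> in_X e I x.
Proof. by move=> hIJ hX a /hIJ /hX. Qed.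

Lemma X_comp (K J : S -> Prop) h g : (forall a, K a -> J a) ->
  in_X e J h -> in_X e K g -> inP J g -> in_X e K (gmul h g).
Proof.
move=> hKJ hh hg hgJ a ha.
have hga : inP J (gmul g (e a)) by apply: parab_mul => //; apply: parab_e; apply: hKJ.
rewrite -gmulA (add_len (X_min hh) hga) (add_len (X_min hh) hgJ) ltn_add2l.
exact: hg.
Qed.

Lemma main_thm u v u' :
  clt e u v -> covers_in e u v u' ->
  exists s : S,
    [/\ Des e (pcomp_hi e (supp e u) v) s,
        u' = gmul (pcomp_lo e (fun t => supp e u t \/ t = s)
                             (pcomp_hi e (supp e u) v)) u &
        forall t, csupp e u' t <-> (csupp e u t /\ t <> s)].
Proof.
case=> huv _ [[huu' hne] hu'v hcov].
set I := supp e u in huv huu' *.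
set J := supp e u' in hu'v.
set x := pcomp_hi e I v.
have [hxX _] := hi_spec I v.
have huI : inP I u by apply: supp_parab.
have hv : v = gmul x u by have [_ <-] := lo_spec I v; rewrite huv.
set y := pcomp_hi e I u'.
have [hyX _] := hi_spec I u'.
have hu' : u' = gmul y u by have [_ <-] := lo_spec I u'; rewrite huu'.
have hIJ : forall t, I t -> J t by move=> t ht; rewrite /J hu'; exact: (@supp_mul I y u hyX huI t ht).
have huJ : inP J u by apply: parab_sub huI.
set h := pcomp_hi e J x.
have [hhX hhJ] := hi_spec J x.
have hlo : pcomp_lo e J v = gmul (pcomp_lo e J x) u.
  have [hh1 hh2] := lo_mul hhX (parab_mul hhJ huJ).
  by rewrite hv -[x in gmul x u](gmulKVg h) -gmulA hh2.
have hyeq : y = pcomp_lo e J x.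
  by apply: (@gmulIr _ u); rewrite -hlo hu'v.
have hyJ : inP J y by rewrite hyeq; case: (lo_spec J x).
have hxy : x = gmul h y by rewrite hyeq; case: (lo_spec J x).
have hy1 : y <> gone by move=> h1; apply: hne; rewrite hu' h1 gmul1g.
have [ys0 [hys0 hsz0]] := red_word y.
case/lastP: ys0 hys0 hsz0 => [|ys s] hys hsz; first by case: hy1; rewrite -hys.
have hys_s : ell e (gmul y (e s)) < ell e y.
  have -> : gmul y (e s) = wprod e ys by rewrite -hys wprod_rcons -gmulA he2 gmulg1.
  by rewrite -hsz size_rcons ltnS ell_min.
have hsI : ~ I s.
  by move=> hs; have := hyX s hs; rewrite ltnNge ltnW.
have hsJ : J s.
  apply: (@red_letters J (rcons ys s)); rewrite ?hys //.
  by rewrite mem_rcons inE eqxx.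
set K := fun t => I t \/ t = s.
have hKJ : forall t, K t -> J t by move=> t [/hIJ|->].
have hIK : forall t, I t -> K t by move=> t ht; left.
set g := pcomp_hi e K y.
set y2 := pcomp_lo e K y.
have [hgX _] := hi_spec K y.
have [hy2K hgy2] := lo_spec K y.
have hgJ : inP J g.
  have -> : g = gmul y (ginv y2) by rewrite -hgy2 gmulgK.
  by apply: parab_mul => //; apply: parab_inv; apply: parab_sub hy2K.
have hloKx : pcomp_lo e K x = y2.
  have hX' : in_X e K (gmul h g) := @X_comp K J h g hKJ hhX hgX hgJ.
  by rewrite hxy -{1}hgy2 gmulA; case: (lo_mul hX' hy2K).
have ly : ell e y = ell e g + ell e y2 by rewrite -{1}hgy2 (add_len (X_min hgX) hy2K).
have lys : ell e (gmul y (e s)) = ell e g + ell e (gmul y2 (e s)).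
  have -> : gmul y (e s) = gmul g (gmul y2 (e s)) by rewrite gmulA hgy2.
  rewrite (add_len (X_min hgX)) //.
  by apply: parab_mul => //; apply: parab_e; right.
have hy2s : ell e (gmul y2 (e s)) < ell e y2 by move: hys_s; rewrite ly lys ltn_add2l.
have hy21 : y2 <> gone.
  by move=> h1; move: hy2s; rewrite h1 gmul1g ell_e ell1.
have hy2X : in_X e I y2.
  move=> a ha; have := hyX a ha; rewrite -/y.
  have -> : gmul y (e a) = gmul g (gmul y2 (e a)) by rewrite gmulA hgy2.
  rewrite ly (add_len (X_min hgX)) ?ltn_add2l //.
  by apply: parab_mul => //; apply: parab_e; apply: hIK.
set u'' := gmul y2 u.
have hu''K : inP K u'' by apply: parab_mul => //; apply: parab_sub huI.
have hclt : clt e u u''.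
  split; first by rewrite /cle /u''; have [_ ->] := lo_mul hy2X huI.
  by move=> h1; apply: hy21; apply: (@gmulIr _ u); rewrite gmul1g.
have hu'g : u' = gmul g u'' by rewrite hu' /u'' gmulA hgy2.
have hcle : cle e u'' u'.
  rewrite /cle hu'g.
  have hLK : forall t, supp e u'' t -> K t by apply: parab_supp.
  by have [_ ->] := lo_mul (X_sub hLK hgX) (supp_parab u'').
have heq : u'' = u'.
  apply: NNPP => hneq; apply: hcov; exists u''; split=> //; split=> //.
have hKu' : forall t, supp e u' t -> K t.
  by move=> t; rewrite -heq; exact: (@parab_supp K u'' hu''K t).
have hsupp : forall t, supp e u' t <-> K t.
  move=> t; split; first exact: hKu'.
  case=> [ht|->].
    by rewrite hu'; exact: (@supp_mul I y u hyX huI t ht).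
  apply: NNPP => hns.
  have hu'I : inP I u'.
    apply: (@parab_sub (supp e u') I u' _ (supp_parab u')) => t' ht'.
    by case: (hKu' t' ht') => // eqt; subst t'.
  apply: hne; rewrite -huu'.
  by rewrite -{1}(gmul1g u'); have [_ ->] := lo_mul (@X1 I) hu'I.
exists s; split.
- rewrite /Des -/x hxy -gmulA.
  have hysJ : inP J (gmul y (e s)) by apply: parab_mul => //; apply: parab_e.
  by rewrite (add_len (X_min hhX) hysJ) (add_len (X_min hhX) hyJ) ltn_add2l.
- by rewrite hloKx -heq.
- move=> t; rewrite /csupp hsupp /K; split.
    by move=> hn; split=> [hi|hts]; apply: hn; [left|right].
  by case=> h1 h2 [|].
Qed.

End Cox3.

Theorem mainTheorem10 (W : group) (S : finType) (e : S -> W)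
  (hcox : coxeter_system e) (u v u' : W) :
  clt e u v -> covers_in e u v u' ->
  exists s : S,
    [/\ Des e (pcomp_hi e (supp e u) v) s,
        u' = gmul (pcomp_lo e (fun t => supp e u t \/ t = s)
                             (pcomp_hi e (supp e u) v)) u &
        forall t, csupp e u' t <-> (csupp e u t /\ t <> s)].
Proof. exact: main_thm. Qed.
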